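(* Let $n\ge6$ be even, $l$ an integer with $2\le l<n/2$, $m\in\mathbb N$, $B=B^{(1,n,l)}$, and assume the seeds are i.i.d. uniform on $[n]$. Then for every $i\in B\setminus\{l+1\}$, $$\mathsf P\bigl(\Xi_B(l+1)\le\Xi_B(i)\bigr)\le\exp\Bigl\{m\log\Bigl[1-\tfrac1n\bigl(\sqrt{l+1}-\sqrt2\bigr)^2\Bigr]\Bigr\}.$$
   Context: Candidates $[n]$, $m$ voters; voter $j$ has the clockwise oriented preference list $(s_j,s_j+1,\dots,n,1,\dots,s_j-1)$ with seed $s_j$; the seeds are independent and uniform on $[n]$. In an election among a non-empty $S\subseteq[n]$ each voter votes for the first candidate of $S$ in its list; $\Xi_S(i)$ is the number of votes for $i\in S$. For even $n$ and $2\le l<n/2$: $B^{(1,n,l)}=\{n-l+1,\dots,n\}\cup\{l+2i-1:1\le i\le (n-2l)/2\}$ (the complement of $A^{(1,n,l)}=\{1,\dots,l\}\cup\{l+2i:1\le i\le(n-2l)/2\}$). *)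

(* Defs.v *)
From mathcomp Require Import all_boot.
From Stdlib Require Import Reals.

Set Implicit Arguments.
Unset Strict Implicit.
Unset Printing Implicit Defensive.

(* Candidates are the natural numbers 1..n.  A seed is an element s : 'I_n,
   representing the seed value (val s).+1 in [n]. *)

(* Position of candidate c (in 1..n) in the clockwise list of a voter with
   seed value sv (in 1..n): the list is (sv, sv+1, ..., n, 1, ..., sv-1). *)
Definition rank (n sv c : nat) : nat := (c + n - sv) %% n.

Definition votes_for (n : nat) (S : pred nat) (s : 'I_n) (i : nat) : bool :=
  [&& 1 <= i <= n, S i &
      [forall c : 'I_n, S c.+1 ==> (rank n s.+1 i <= rank n s.+1 c.+1)]].

Definition Xi (n m : nat) (S : pred nat) (seeds : {ffun 'I_m -> 'I_n}) (i : nat)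
  : nat := #|[set j : 'I_m | votes_for S (seeds j) i]|.

Definition Bset (n l : nat) : pred nat := fun c =>
  ((n - l + 1 <= c) && (c <= n)) ||
  [exists i : 'I_((n - 2 * l) %/ 2).+1, (1 <= i) && (c == l + 2 * i - 1)].

(* Probability under i.i.d. uniform seeds on [n], i.e. uniform measure on
   the n^m seed assignments. *)
Definition prob_seeds (n m : nat) (E : pred {ffun 'I_m -> 'I_n}) : R :=
  (INR #|[set s | E s]| / INR (n ^ m))%R.
Arguments prob_seeds n m E : clear implicits.

(* Main.v *)
Require Import Defs.
From mathcomp Require Import all_boot.
From Stdlib Require Import Reals.
From mathcomp Require all_order all_algebra zify Rstruct.
From Stdlib Require Import Lra.

Module Comb.
Import zify.
Set Implicit Arguments.
Unset Strict Implicit.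

Lemma test n l j : ~~ odd n -> 2 * l < n -> (j <= (n - 2 * l) %/ 2)%nat -> l + 2 * j - 1 <= n - l - 1.
Proof. move=> /negbTE ho; have hm : n %% 2 = 0 by rewrite modn2 ho. lia. Qed.

Lemma rank_le' n s c : 1 <= s <= c -> c <= n -> rank n s c = c - s.
Proof. move=> /andP [h1 h2] h3. rewrite /rank.
have -> : c + n - s = (c - s) + n by lia. rewrite modnDr modn_small //; lia. Qed.
Lemma rank_gt n s c : c < s <= n -> rank n s c = c + n - s.
Proof. move=> /andP [h1 h2]. rewrite /rank modn_small //; lia. Qed.

Lemma B_bounds n l c : 2*l < n -> Bset n l c -> 1 <= l+1 <= c /\ c <= n.
Proof.
move=> hl /orP [/andP[h1 h2]| /existsP [j /andP [hj /eqP ->]]]; first lia.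
have := ltn_ord j; lia.
Qed.

Lemma B_odd n l j : (1 <= j <= (n - 2 * l) %/ 2) -> Bset n l (l + 2 * j - 1).
Proof.
move=> /andP[h1 h2]; apply/orP; right; apply/existsP.
have h : j < ((n - 2*l) %/2).+1 by lia.
by exists (Ordinal h); rewrite /= h1 eqxx.
Qed.

Lemma B_l1 n l : ~~ odd n -> 2*l < n -> Bset n l (l+1).
Proof.
move=> /negbTE ho hl; have hm : n %% 2 = 0 by rewrite modn2 ho.
have -> : l + 1 = l + 2 * 1 - 1 by lia.
apply: B_odd; lia.
Qed.

Lemma B_prev n l i : ~~ odd n -> 2 <= l -> 2*l < n -> Bset n l i -> i <> l+1 ->
  exists k, [/\ 1 <= k <= 2, k < i & Bset n l (i - k)].
Proof.
move=> /negbTE ho h2l hl hB hi; have hm : n %% 2 = 0 by rewrite modn2 ho.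
case/orP: hB => [/andP[h1 h2]| /existsP [j /andP [hj /eqP hij]]].
  have [e|ne] := eqVneq i (n - l + 1).
    exists 2; split; [done|lia|].
    have -> : i - 2 = l + 2 * ((n - 2 * l) %/ 2) - 1 by lia.
    apply: B_odd; lia.
  exists 1; split; [done|lia|].
  apply/orP; left; apply/andP; split; lia.
exists 2; split; [done|lia|].
have := ltn_ord j => hj'.
have -> : i - 2 = l + 2 * (j - 1) - 1 by lia.
apply: B_odd; lia.
Qed.

Lemma votes_a n l (s : 'I_n) : ~~ odd n -> 2*l < n -> s < l+1 -> votes_for (Bset n l) s (l+1).
Proof.
move=> ho hl hs; rewrite /votes_for; apply/and3P; split.
- apply/andP; split; lia.
- exact: B_l1.
apply/forallP => c; apply/implyP => hc.
have [/andP[hc1 hc2] hc3] := B_bounds hl hc.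
rewrite !rank_le'; try (apply/andP; split); lia.
Qed.

Lemma card_a n l : ~~ odd n -> 2*l < n ->
  l + 1 <= #|(fun s : 'I_n => votes_for (Bset n l) s (l+1))|.
Proof.
move=> ho hl; have hle : l + 1 <= n by lia.
have hinj : injective (widen_ord hle) by move=> x y /(congr1 val) /= /val_inj.
rewrite -[X in X <= _]card_ord -(card_imset _ hinj).
apply: subset_leq_card; apply/subsetP => x /imsetP [y _ ->].
rewrite unfold_in; apply: votes_a => //=; exact: ltn_ord.
Qed.

Lemma votes_b n l i (s : 'I_n) : ~~ odd n -> 2 <= l -> 2*l < n -> Bset n l i -> i <> l+1 ->
  votes_for (Bset n l) s i -> (val s = i - 1) \/ (val s = i - 2).
Proof.
move=> ho h2l hl hB hil.
have [k [/andP[hk1 hk2] hki hBk]] := B_prev ho h2l hl hB hil.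
have [/andP[hi0 hi1] hi2] := B_bounds hl hB.
move=> /and3P[_ _ /forallP hc].
have hik : i - k - 1 < n by lia.
have := hc (Ordinal hik); rewrite /=.
have -> : (i - k - 1).+1 = i - k by lia.
rewrite hBk /= => hr.
have hs := ltn_ord s.
have [h1|h1] := leqP s.+1 (i - k).
  move: hr; rewrite !rank_le'; try (apply/andP; split); lia.
have [h2|h2] := leqP s.+1 i; first lia.
move: hr; rewrite !rank_gt; try (apply/andP; split); lia.
Qed.

Lemma card_b n l i : ~~ odd n -> 2 <= l -> 2*l < n -> Bset n l i -> i <> l+1 ->
  #|(fun s : 'I_n => votes_for (Bset n l) s i)| <= 2.
Proof.
move=> ho h2l hl hB hil.
rewrite cardE -(size_map val).
have -> : 2 = size [:: i - 1; i - 2] by [].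
apply: uniq_leq_size.
  rewrite map_inj_uniq ?enum_uniq //; exact: val_inj.
move=> x /mapP [y hy ->]; rewrite mem_enum unfold_in in hy.
by case: (votes_b ho h2l hl hB hil hy) => ->; rewrite !inE eqxx ?orbT.
Qed.


Lemma dab_lemma n l i (s : 'I_n) : ~~ odd n -> 2*l < n -> Bset n l i -> i <> l+1 ->
  votes_for (Bset n l) s (l+1) -> ~~ votes_for (Bset n l) s i.
Proof.
move=> ho hl hB hi /and3P[_ _ /forallP h1]; apply/negP => /and3P[_ _ /forallP h2].
have [/andP[_ hi1] hi2] := B_bounds hl hB.
have hi' : i.-1 < n by lia.
have hl' : l < n by lia.
have := h1 (Ordinal hi'); have := h2 (Ordinal hl'); rewrite /=.
have -> : i.-1.+1 = i by lia.
have -> : l.+1 = l + 1 by rewrite addn1.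
rewrite hB (B_l1 ho hl) /= => r2 r1.
have hs := ltn_ord s.
have [c1|c1] := leqP s.+1 (l + 1).
  move: r2; rewrite !rank_le'; try (apply/andP; split); lia.
have [c2|c2] := leqP s.+1 i.
  move: r1; rewrite (rank_le' (c:=i)) ?(rank_gt (c:=l+1)); try (apply/andP; split); lia.
move: r2; rewrite !rank_gt; try (apply/andP; split); lia.
Qed.
End Comb.

Module Alg.
Import all_order all_algebra.
Import Order.TTheory GRing.Theory Num.Theory.
Local Open Scope ring_scope.
Lemma core (F : realFieldType) (T : finType) (m : nat) (a b : pred T) (t : F) :
  0 < t -> t <= 1 -> (forall s, a s -> ~~ b s) ->
  (#|[set f : {ffun 'I_m -> T} | (#|[set j | a (f j)]| <= #|[set j | b (f j)]|)%nat ]|)%:R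
  <= (\sum_s (if a s then t else if b s then t^-1 else 1))^+m.
Proof.
move=> t0 t1 dab.
set g := fun s : T => if a s then t else if b s then t^-1 else 1.
have g0 s : 0 <= g s by rewrite /g; case: (a s); case: (b s); rewrite ?invr_ge0 ?ler01 // ltW.
rewrite -/g -[m in X in _ <= X]card_ord -prodr_const bigA_distr_bigA /=.
rewrite -sum1_card natr_sum.
apply: le_trans (_ : \sum_(f in [set f : {ffun 'I_m -> T} | (#|[set j | a (f j)]| <= #|[set j | b (f j)]|)%nat ]) \prod_i g (f i) <= _).
  apply: ler_sum => f; rewrite inE => hf.
  rewrite (bigID (fun j => a (f j))) /= [X in _ * X](bigID (fun j => b (f j))) /=.
  rewrite (eq_bigr (fun _ => t)); last by move=> j; rewrite /g => ->.
  rewrite [X in _ * (X * _)](eq_bigr (fun _ => t^-1)); last first.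
    by move=> j /andP[/negbTE ha hb]; rewrite /g ha hb.
  rewrite [X in _ * (_ * X)](eq_bigr (fun _ => 1)); last first.
    by move=> j /andP[/negbTE ha /negbTE hb]; rewrite /g ha hb.
  rewrite !prodr_const expr1n mulr1.
  have -> : #|[pred j | a (f j)]| = #|[set j | a (f j)]| by apply: eq_card => j; rewrite inE.
  have -> : #|[pred j | ~~ a (f j) & b (f j)]| = #|[set j | b (f j)]|.
    apply: eq_card => j; rewrite inE /=.
    rewrite !inE; case ha: (a (f j)); case hb: (b (f j)) => //; by move: (dab _ ha); rewrite hb.
  rewrite -(subnKC hf) exprD mulrA -exprMn mulfV ?gt_eqF // expr1n mul1r.
  by apply: exprn_ege1; rewrite invf_ge1.
rewrite [X in _ <= X](bigID (fun f => f \in [set f : {ffun 'I_m -> T} | (#|[set j | a (f j)]| <= #|[set j | b (f j)]|)%nat ])) /=.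
rewrite lerDl; apply: sumr_ge0 => f _; apply: prodr_ge0 => i _; exact: g0.
Qed.

Lemma sumg (F : fieldType) (T : finType) (a b : pred T) (t : F) :
  (forall s, a s -> ~~ b s) ->
  \sum_s (if a s then t else if b s then t^-1 else 1) =
  #|T|%:R + (t - 1) * #|a|%:R + (t^-1 - 1) * #|b|%:R.
Proof.
move=> dab.
rewrite (eq_bigr (fun s => 1 + ((if a s then t - 1 else 0) + (if b s then t^-1 - 1 else 0)))); last first.
  move=> s _; case ha: (a s); case hb: (b s) => //.
  - by move: (dab _ ha); rewrite hb.
  - by rewrite addr0 addrC subrK.
  - by rewrite add0r addrC subrK.
  - by rewrite !addr0.
rewrite big_split big_split /= -!big_mkcond /= sumr_const.
rewrite (sumr_const a) (sumr_const b) addrA.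
by rewrite !mulr_natr.
Qed.

Lemma sumg_ge0 (F : realFieldType) (T : finType) (a b : pred T) (t : F) :
  0 < t -> (forall s, a s -> ~~ b s) ->
  0 <= #|T|%:R + (t - 1) * #|a|%:R + (t^-1 - 1) * #|b|%:R.
Proof.
move=> t0 dab; rewrite -sumg //; apply: sumr_ge0 => s _.
by case: (a s); case: (b s); rewrite ?invr_ge0 ?ler01 // ltW.
Qed.
End Alg.

Module Glue.
Import all_order all_algebra Rstruct.
Local Open Scope R_scope.

Lemma coreR (T : finType) (m : nat) (a b : pred T) (t : R) :
  0 < t -> t <= 1 -> (forall s, a s -> ~~ b s) ->
  INR #|[set f : {ffun 'I_m -> T} | (#|[set j | a (f j)]| <= #|[set j | b (f j)]|)%nat]|
    <= (INR #|T| + (t - 1) * INR #|a| + (/ t - 1) * INR #|b|) ^ m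
  /\ 0 <= INR #|T| + (t - 1) * INR #|a| + (/ t - 1) * INR #|b|.
Proof.
move=> t0 t1 dab.
have H1 := @Alg.core R T m a b t (introT RltP t0) (introT RleP t1) dab.
have H2 := @Alg.sumg R T a b t dab.
rewrite H2 in H1.
split.
  apply/RleP; rewrite RpowE !INRE; exact: H1.
apply/RleP; rewrite !INRE; exact: (@Alg.sumg_ge0 R T a b t (introT RltP t0) dab).
Qed.
End Glue.

Import zify.

Theorem mainTheorem4 (n l m : nat) :
  6 <= n -> ~~ odd n -> 2 <= l -> 2 * l < n ->
  forall i : nat, Bset n l i -> i <> l + 1 ->
  (prob_seeds n m (fun s => leq (Xi (Bset n l) s (l + 1)) (Xi (Bset n l) s i))
   <= exp (INR m * ln (1 - / INR n * (sqrt (INR (l + 1)) - sqrt 2) ^ 2)))%R.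
Proof.
move=> hn ho hl hln i hB hi.
set a := (fun s : 'I_n => votes_for (Bset n l) s (l+1)).
set b := (fun s : 'I_n => votes_for (Bset n l) s i).
have dab : forall s, a s -> ~~ b s by move=> s; exact: Comb.dab_lemma.
have hA := Comb.card_a (l:=l) ho hln.
have hBc := Comb.card_b ho hl hln hB hi.
have hl3 : (3 <= INR (l + 1))%R.
  replace 3%R with (INR 3) by (simpl; lra); apply le_INR; apply/leP; lia.
have hn0 : (INR (l + 1) < INR n)%R by apply lt_INR; apply/ltP; lia.
set sl := sqrt (INR (l + 1)).
set s2 := sqrt 2.
have hsl : (sl * sl = INR (l + 1))%R by apply sqrt_sqrt; lra.
have hs2 : (s2 * s2 = 2)%R by apply sqrt_sqrt; lra.
have hs20 : (0 < s2)%R by apply sqrt_lt_R0; lra.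
have hs2l : (s2 < sl)%R by apply sqrt_lt_1_alt; lra.
set t := (s2 / sl)%R.
have ht0 : (0 < t)%R by unfold t; apply Rdiv_lt_0_compat; lra.
have ht1 : (t <= 1)%R.
  unfold t; apply (Rmult_le_reg_r sl); [lra|]; field_simplify; lra.
have htinv : (/ t = sl / s2)%R by unfold t; field; lra.
have [H1 H0] := @Glue.coreR 'I_n m a b t ht0 ht1 dab.
rewrite card_ord in H1 H0.
set S := (INR n + (t - 1) * INR #|a| + (/ t - 1) * INR #|b|)%R in H1 H0.
have hAR : (INR (l + 1) <= INR #|a|)%R by apply le_INR; apply/leP.
have hBR : (INR #|b| <= 2)%R.
  replace 2%R with (INR 2) by (simpl; lra); apply le_INR; apply/leP; exact: hBc.
have hB0 := pos_INR #|b|.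
have hS : (S <= INR n - (sl - s2) ^ 2)%R.
  have e1 : ((t - 1) * INR #|a| <= (t - 1) * INR (l + 1))%R.
    apply Rmult_le_compat_neg_l; lra.
  have e2 : ((/ t - 1) * INR #|b| <= (/ t - 1) * 2)%R.
    apply Rmult_le_compat_l; [|lra].
    rewrite htinv; apply (Rmult_le_reg_r s2); [lra|]; field_simplify; lra.
  have e3 : ((t - 1) * INR (l + 1) + (/ t - 1) * 2 = - (sl - s2) ^ 2)%R.
    rewrite -hsl -hs2 htinv; unfold t; field; lra.
  unfold S; lra.
have hnR : (0 < INR n)%R by lra.
have hd : ((sl - s2) ^ 2 < INR n)%R.
  have : ((sl - s2) ^ 2 <= sl * sl)%R by nra.
  lra.
have hx : (0 < 1 - / INR n * (sl - s2) ^ 2)%R.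
  have : (/ INR n * (sl - s2) ^ 2 < / INR n * INR n)%R.
    apply Rmult_lt_compat_l; [apply Rinv_0_lt_compat|]; lra.
  rewrite Rinv_l; lra.
rewrite -ln_pow // exp_ln; last by apply pow_lt.
rewrite /prob_seeds pow_INR.
have hnm : (0 < INR n ^ m)%R by apply pow_lt.
apply (Rle_trans _ (S ^ m * / INR n ^ m)).
  apply Rmult_le_compat_r; [left; apply Rinv_0_lt_compat; lra|exact: H1].
rewrite -pow_inv -Rpow_mult_distr.
apply pow_incr; split.
  apply Rmult_le_pos; [lra|left; apply Rinv_0_lt_compat; lra].
apply (Rmult_le_reg_r (INR n)); [lra|].
rewrite Rmult_assoc Rinv_l; [|lra].
have : ((1 - / INR n * (sl - s2) ^ 2) * INR n = INR n - (sl - s2) ^ 2)%R by field; lra.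
lra.
Qed.
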